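(* Let $n\ge 1$ and let $\alpha,\beta,\gamma,\alpha_i,\beta_i,\gamma_i\in\widehat{\mathbb{F}_q^\times}$ ($1\le i\le n$). (i) For all $\lambda_1,\dots,\lambda_n\in\mathbb{F}_q$, $$-g(\alpha)\,F_A^{(n)}\!\left({\alpha;\beta_1,\dots,\beta_n\atop \gamma_1,\dots,\gamma_n};\lambda_1,\dots,\lambda_n\right)=\sum_{t\in\mathbb{F}_q^\times}\psi(t)\alpha(t)\prod_{i=1}^n {}_1F_1\!\left({\beta_i\atop\gamma_i};\lambda_i t\right).$$ (ii) For all $\lambda_1,\dots,\lambda_n\in\mathbb{F}_q$, $$-\frac{q}{g^\circ(\gamma)}\,F_B^{(n)}\!\left({\alpha_1,\dots,\alpha_n;\beta_1,\dots,\beta_n\atop \gamma};\lambda_1,\dots,\lambda_n\right)=\sum_{t\in\mathbb{F}_q^\times}\psi(-t)\overline{\gamma}(t)\prod_{i=1}^n {}_2F_0\!\left({\alpha_i,\beta_i\atop -};\frac{\lambda_i}{t}\right).$$ (iii) Suppose $p\neq 2$. For all $\lambda_1,\dots,\lambda_n\in\mathbb{F}_q$, $$-g(\alpha^2)\,F_C^{(n)}\!\left({\alpha;\alpha\phi\atop \beta_1,\dots,\beta_n};\lambda_1,\dots,\lambda_n\right)=\sum_{t\in\mathbb{F}_q^\times}\psi(t)\alpha^2(t)\prod_{i=1}^n {}_0F_1\!\left({-\atop\beta_i};\frac{\lambda_i t^2}{4}\right).$$ (iv) For all $\lambda_1,\dots,\lambda_n\in\mathbb{F}_q$, $$g(\alpha)g(\beta)\,F_C^{(n)}\!\left({\alpha;\beta\atop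 \gamma_1,\dots,\gamma_n};\lambda_1,\dots,\lambda_n\right)=\sum_{s,t\in\mathbb{F}_q^\times}\psi(s+t)\alpha(s)\beta(t)\prod_{i=1}^n {}_0F_1\!\left({-\atop\gamma_i};\lambda_i st\right).$$
   Context: $\mathbb{F}_q$ is a finite field with $q$ elements and characteristic $p$. $\widehat{\mathbb{F}_q^\times}=\mathrm{Hom}(\mathbb{F}_q^\times,\overline{\mathbb{Q}}^\times)$ is the group of multiplicative characters; $\varepsilon$ is the trivial character and $\phi$ the quadratic character (used only when $p\ne2$). Every character $\eta$ (including $\varepsilon$) is extended by $\eta(0)=0$; $\overline{\eta}=\eta^{-1}$; $\delta(\eta)=1$ if $\eta=\varepsilon$ and $0$ otherwise. A non-trivial additive character $\psi$ of $\mathbb{F}_q$ is fixed. Gauss sums: $g(\eta)=-\sum_{x\in\mathbb{F}_q^\times}\psi(x)\eta(x)$ and $g^\circ(\eta)=q^{\delta(\eta)}g(\eta)$. Pochhammer analogues: $(\alpha)_\nu=g(\alpha\nu)/g(\alpha)$, $(\alpha)^\circ_\nu=g^\circ(\alpha\nu)/g^\circ(\alpha)$. For characters $\alpha_1,\dots,\alpha_m,\beta_1,\dots,\beta_n$ and $\lambda\in\mathbb{F}_q$, $${}_mF_n\!\left({\alpha_1,\dots,\alpha_m\atop\beta_1,\dots,\beta_n};\lambda\right)=\frac{1}{1-q}\sum_{\nu\in\widehat{\mathbb{F}_q^\times}}\frac{(\alpha_1)_\nu\cdots(\alpha_m)_\nu}{(\varepsilon)^\circ_\nu(\beta_1)^\circ_\nu\cdots(\beta_n)^\circ_\nu}\nu(\lambda)$$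 (an empty list of parameters is written $-$). Lauricella functions over $\mathbb{F}_q$: for $\lambda_i\in\mathbb{F}_q$, with all sums over $\nu_1,\dots,\nu_n\in\widehat{\mathbb{F}_q^\times}$ and $P=\prod_{i}\frac{\nu_i(\lambda_i)}{(\varepsilon)^\circ_{\nu_i}}$, $F_A^{(n)}\!\left({\alpha;\beta_1,\dots,\beta_n\atop\gamma_1,\dots,\gamma_n};\lambda\right)=\frac{1}{(1-q)^n}\sum\frac{(\alpha)_{\nu_1\cdots\nu_n}\prod_i(\beta_i)_{\nu_i}}{\prod_i(\gamma_i)^\circ_{\nu_i}}P$, $F_B^{(n)}\!\left({\alpha_1,\dots,\alpha_n;\beta_1,\dots,\beta_n\atop\gamma};\lambda\right)=\frac{1}{(1-q)^n}\sum\frac{\prod_i(\alpha_i)_{\nu_i}(\beta_i)_{\nu_i}}{(\gamma)^\circ_{\nu_1\cdots\nu_n}}P$, $F_C^{(n)}\!\left({\alpha;\beta\atop\gamma_1,\dots,\gamma_n};\lambda\right)=\frac{1}{(1-q)^n}\sum\frac{(\alpha)_{\nu_1\cdots\nu_n}(\beta)_{\nu_1\cdots\nu_n}}{\prod_i(\gamma_i)^\circ_{\nu_i}}P$. *)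

(* Defs.v *)
From HB Require Import structures.
From mathcomp Require Import all_boot all_order all_algebra all_field.
Set Implicit Arguments. Unset Strict Implicit. Unset Printing Implicit Defensive.
Import Order.TTheory GRing.Theory Num.Theory.
Local Open Scope ring_scope.

Section FqHyp.
Variable F : finFieldType.

(* Nq = q - 1 = #|F| - 1 (written so that it is syntactically a successor). *)
Definition Nq : nat := (#|F|.-2).+1.

Definition wq : algC := sval (C_prim_root_exists (ltn0Sn (#|F|.-2))).

Definition charval (k : {ffun F -> 'I_Nq}) : {ffun F -> algC} :=
  [ffun x => if x == 0 then 0 else wq ^+ k x].

Definition is_mchar (f : {ffun F -> algC}) : bool :=
  [&& f 0 == 0, f 1 == 1 & [forall x, [forall y, f (x * y) == f x * f y]]].

(* The (finite) group of multiplicative characters \hat{F_q^x}: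
   every character takes values in the (q-1)-th roots of unity, hence is of
   the form x |-> wq ^+ k x for a unique exponent map k. *)
Definition mchar := {k : {ffun F -> 'I_Nq} | is_mchar (charval k)}.
Definition mch (nu : mchar) : {ffun F -> algC} := charval (val nu).
Coercion mch : mchar >-> finfun_of.

Definition eps : {ffun F -> algC} := [ffun x => if x == 0 then 0 else 1].
Definition quadchar : {ffun F -> algC} :=
  [ffun x => if x == 0 then 0
             else if [exists y : F, y ^+ 2 == x] then 1 else -1].

Definition cmul (a b : {ffun F -> algC}) : {ffun F -> algC} :=
  [ffun x => a x * b x].
Definition cinv (a : {ffun F -> algC}) : {ffun F -> algC} :=
  [ffun x => (a x)^-1].

Definition qC : algC := (#|F|)%:R.

Variable psi : F -> algC.

Definition gauss (eta : {ffun F -> algC}) : algC :=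
  - \sum_(x : F | x != 0) psi x * eta x.
Definition gaussc (eta : {ffun F -> algC}) : algC :=
  qC ^+ (eta == eps) * gauss eta.

Definition poch (a nu : {ffun F -> algC}) : algC := gauss (cmul a nu) / gauss a.
Definition pochc (a nu : {ffun F -> algC}) : algC := gaussc (cmul a nu) / gaussc a.

Definition hypF (As Bs : seq {ffun F -> algC}) (lam : F) : algC :=
  (1 - qC)^-1 * \sum_(nu : mchar)
    (\prod_(a <- As) poch a nu) /
      (pochc eps nu * \prod_(b <- Bs) pochc b nu) * nu lam.

Definition cprod n (nus : {ffun 'I_n -> mchar}) : {ffun F -> algC} :=
  [ffun x => \prod_(i < n) (nus i : {ffun F -> algC}) x].

Definition lauP n (nus : {ffun 'I_n -> mchar}) (lam : 'I_n -> F) : algC :=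
  \prod_(i < n) ((nus i : {ffun F -> algC}) (lam i) / pochc eps (nus i)).

Definition FA n (al : {ffun F -> algC}) (be ga : 'I_n -> {ffun F -> algC})
    (lam : 'I_n -> F) : algC :=
  (1 - qC)^-n * \sum_(nus : {ffun 'I_n -> mchar})
    poch al (cprod nus) * (\prod_(i < n) poch (be i) (nus i)) /
      (\prod_(i < n) pochc (ga i) (nus i)) * lauP nus lam.

Definition FB n (al be : 'I_n -> {ffun F -> algC}) (ga : {ffun F -> algC})
    (lam : 'I_n -> F) : algC :=
  (1 - qC)^-n * \sum_(nus : {ffun 'I_n -> mchar})
    (\prod_(i < n) (poch (al i) (nus i) * poch (be i) (nus i))) /
      pochc ga (cprod nus) * lauP nus lam.

Definition FC n (al be : {ffun F -> algC}) (ga : 'I_n -> {ffun F -> algC})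
    (lam : 'I_n -> F) : algC :=
  (1 - qC)^-n * \sum_(nus : {ffun 'I_n -> mchar})
    poch al (cprod nus) * poch be (cprod nus) /
      (\prod_(i < n) pochc (ga i) (nus i)) * lauP nus lam.

End FqHyp.

(* Main.v *)
Require Import Defs.
From HB Require Import structures.
From mathcomp Require Import all_boot all_order all_algebra all_field.
From mathcomp Require Import ring.
Import Order.TTheory GRing.Theory Num.Theory.
Local Open Scope ring_scope.
Set Implicit Arguments. Unset Strict Implicit. Unset Printing Implicit Defensive.

Section Main.
Variable F : finFieldType.
Variable psi : F -> algC.
Hypothesis psi_add : forall x y : F, psi (x + y) = psi x * psi y.
Hypothesis psi0 : psi 0 = 1.
Hypothesis psi_nt : exists x : F, psi x != 1.

Notation ch := {ffun F -> algC}.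

Lemma sum_psi : \sum_x psi x = 0.
Proof.
case: psi_nt => a Ha.
have E : \sum_x psi x = psi a * \sum_x psi x.
  rewrite mulr_sumr (reindex_inj (addrI a)) /=.
  by apply: eq_bigr => x _; rewrite psi_add.
have : (1 - psi a) * \sum_x psi x = 0 by rewrite mulrBl mul1r -E subrr.
by move/eqP; rewrite mulf_eq0 subr_eq0 eq_sym (negbTE Ha) /= => /eqP.
Qed.

Lemma sum_psi_nz : \sum_(x | x != 0) psi x = -1.
Proof.
have := sum_psi; rewrite (bigD1 0) //= psi0 => /eqP.
by rewrite addrC addr_eq0 => /eqP.
Qed.

Lemma qC_nz : qC F != 0.
Proof. by rewrite /qC pnatr_eq0 -lt0n; apply/card_gt0P; exists 0. Qed.

Lemma sum1_nz : \sum_(x : F | x != 0) (1 : algC) = qC F - 1.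
Proof.
have : \sum_(x : F) (1 : algC) = qC F by rewrite sumr_const cardT -cardE.
by rewrite (bigD1 0) //= => <-; rewrite addrC addrK.
Qed.

Lemma sum_psi_scale (c : F) :
  \sum_(t | t != 0) psi (t * c) = if c == 0 then qC F - 1 else -1.
Proof.
case: eqP => [->|/eqP cnz].
  by under eq_bigr do rewrite mulr0 psi0; rewrite sum1_nz.
rewrite -sum_psi_nz [RHS](reindex_inj (mulIf cnz)) /=.
by apply: eq_bigl => x; rewrite mulf_eq0 (negbTE cnz) orbF.
Qed.

Lemma sum_nz_full (f : F -> algC) : f 0 = 0 ->
  \sum_(x | x != 0) f x = \sum_x f x.
Proof. by move=> f0; rewrite [RHS](bigD1 0) //= f0 add0r. Qed.

Lemma cmulE (a b : ch) x : cmul a b x = a x * b x.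
Proof. by rewrite /cmul ffunE. Qed.
Lemma cinvE (a : ch) x : cinv a x = (a x)^-1.
Proof. by rewrite /cinv ffunE. Qed.
Lemma cprodE n (nus : {ffun 'I_n -> mchar F}) x :
  cprod nus x = \prod_(i < n) (nus i : ch) x.
Proof. by rewrite /cprod ffunE. Qed.
Lemma epsE x : eps F x = if x == 0 then 0 else 1.
Proof. by rewrite /eps ffunE. Qed.

Lemma chP (f : ch) : is_mchar f ->
  [/\ f 0 = 0, f 1 = 1 & forall x y, f (x * y) = f x * f y].
Proof.
by case/and3P => /eqP -> /eqP -> /forallP H; split => // x y; have /forallP/(_ y)/eqP := H x.
Qed.

Lemma chM (f : ch) : is_mchar f -> forall x y, f (x * y) = f x * f y.
Proof. by case/chP. Qed.
Lemma ch0 (f : ch) : is_mchar f -> f 0 = 0.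
Proof. by case/chP. Qed.
Lemma ch1 (f : ch) : is_mchar f -> f 1 = 1.
Proof. by case/chP. Qed.

Lemma chV (f : ch) : is_mchar f -> forall x, f x^-1 = (f x)^-1.
Proof.
move=> fc x; case: (eqVneq x 0) => [->|xnz]; first by rewrite invr0 (ch0 fc) invr0.
have : f x * f x^-1 = 1 by rewrite -(chM fc) mulfV // (ch1 fc).
by move=> H; rewrite -[RHS]mulr1 -H mulrA mulVf ?mul1r //; apply/eqP => E; move: H; rewrite E mul0r; move/eqP; rewrite eq_sym oner_eq0.
Qed.

Lemma ch_nz (f : ch) : is_mchar f -> forall x, x != 0 -> f x != 0.
Proof.
move=> fc x xnz; apply/eqP => E.
have : f x * f x^-1 = 1 by rewrite -(chM fc) mulfV // (ch1 fc).
by rewrite E mul0r => /eqP; rewrite eq_sym oner_eq0.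
Qed.

Lemma mkch (f : ch) : f 0 = 0 -> f 1 = 1 -> (forall x y, f (x * y) = f x * f y) -> is_mchar f.
Proof.
move=> h0 h1 hM; apply/and3P; split; try by apply/eqP.
by apply/forallP => x; apply/forallP => y; apply/eqP.
Qed.

Lemma cmul_ch (a b : ch) : is_mchar a -> is_mchar b -> is_mchar (cmul a b).
Proof.
move=> ha hb; apply: mkch => [||x y]; rewrite !cmulE ?(ch0 ha) ?(ch1 ha) ?(ch1 hb) ?mul0r ?mulr1 //.
by rewrite (chM ha) (chM hb) mulrACA.
Qed.

Lemma cinv_ch (a : ch) : is_mchar a -> is_mchar (cinv a).
Proof.
move=> ha; apply: mkch => [||x y]; rewrite !cinvE ?(ch0 ha) ?(ch1 ha) ?invr0 ?invr1 //.
by rewrite (chM ha) invfM.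
Qed.

Lemma eps_ch : is_mchar (eps F).
Proof.
apply: mkch => [||x y]; rewrite !epsE ?eqxx ?oner_eq0 //.
by rewrite mulf_eq0; case: (x == 0); case: (y == 0); rewrite /= ?mulr1 ?mul0r ?mulr0.
Qed.

Lemma mch_ch (nu : mchar F) : is_mchar nu.
Proof. exact: (valP nu). Qed.

Lemma cprod_ch n (nus : {ffun 'I_n -> mchar F}) : (0 < n)%N -> is_mchar (cprod nus).
Proof.
move=> n0; apply: mkch => [||x y]; rewrite !cprodE.
- by case: n nus n0 => [|n] nus // _; rewrite big_ord_recl (ch0 (mch_ch _)) mul0r.
- by rewrite big1 // => i _; rewrite (ch1 (mch_ch _)).
- by rewrite -big_split /=; apply: eq_bigr => i _; rewrite (chM (mch_ch _)).
Qed.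


Lemma gauss_full (f : ch) : f 0 = 0 -> gauss psi f = - \sum_x psi x * f x.
Proof. by move=> f0; rewrite /gauss sum_nz_full // f0 mulr0. Qed.

Lemma gauss_eps : gauss psi (eps F) = 1.
Proof.
rewrite /gauss (eq_bigr (fun x => psi x)) ?sum_psi_nz ?opprK // => x /negbTE xnz.
by rewrite epsE xnz mulr1.
Qed.

Lemma gaussc_eps : gaussc psi (eps F) = qC F.
Proof. by rewrite /gaussc eqxx gauss_eps mulr1 expr1. Qed.

Lemma gaussc_nt (f : ch) : f != eps F -> gaussc psi f = gauss psi f.
Proof. by move/negbTE => h; rewrite /gaussc h expr0 mul1r. Qed.

Lemma ch_nt_ex (f : ch) : is_mchar f -> f != eps F -> exists2 a, a != 0 & f a != 1.
Proof.
move=> fc fnt.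
have /existsP [a /andP [anz fa]] : [exists a, (a != 0) && (f a != 1)]; last by exists a.
apply: contraNT fnt => /existsPn H; apply/eqP/ffunP => x; rewrite epsE.
case: eqP => [->|/eqP xnz]; first exact: ch0.
by have := H x; rewrite xnz /= negbK => /eqP.
Qed.

Lemma sum_ch_nt (f : ch) : is_mchar f -> f != eps F -> \sum_x f x = 0.
Proof.
move=> fc /(ch_nt_ex fc) [a anz fa].
have E : \sum_x f x = f a * \sum_x f x.
  have au : a \is a GRing.unit by rewrite unitfE.
  rewrite mulr_sumr [LHS](reindex_inj (mulrI au)) /=.
  by apply: eq_bigr => x _; rewrite (chM fc).
have : (1 - f a) * \sum_x f x = 0 by rewrite mulrBl mul1r -E subrr.
by move/eqP; rewrite mulf_eq0 subr_eq0 eq_sym (negbTE fa) /= => /eqP.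
Qed.

Lemma sum_nz_ch_nt (f : ch) : is_mchar f -> f != eps F -> \sum_(x | x != 0) f x = 0.
Proof. by move=> fc fnt; rewrite sum_nz_full ?(ch0 fc) // sum_ch_nt. Qed.

Lemma GS (f : ch) : is_mchar f ->
  gaussc psi f * \sum_(t | t != 0) psi (- t) * (f t)^-1 = - qC F.
Proof.
move=> fc; case: (eqVneq f (eps F)) => [->|fnt].
  rewrite gaussc_eps (eq_bigr (fun t => psi (- t))); last first.
    by move=> t /negbTE tnz; rewrite epsE tnz invr1 mulr1.
  have -> : \sum_(t | t != 0) psi (- t) = -1.
    rewrite -sum_psi_nz (reindex_inj (@oppr_inj F)) /=.
    by apply: eq_big => [t|t _]; rewrite ?oppr_eq0 ?opprK.
  by rewrite mulrN1.
rewrite gaussc_nt // /gauss mulNr mulr_suml.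
rewrite (eq_bigr (fun x => \sum_(t | t != 0) psi x * f x * (psi (- t) * (f t)^-1)));
  last by move=> x _; rewrite mulr_sumr.
rewrite exchange_big /=.
rewrite (eq_bigr (fun t => \sum_(u | u != 0) f u * psi (t * (u - 1)))); last first.
  move=> t tnz; rewrite (reindex_inj (mulIf tnz)) /=.
  apply: eq_big => [u|u unz]; first by rewrite mulf_eq0 (negbTE tnz) orbF.
  rewrite (chM fc) mulrACA -psi_add -mulrA mulfV ?(ch_nz fc) // mulr1 mulrC.
  by congr (_ * psi _); rewrite mulrBr mulr1 mulrC.
rewrite exchange_big /=.
rewrite (eq_bigr (fun u => f u * (if u - 1 == 0 then qC F - 1 else -1))); last first.
  by move=> u _; rewrite -mulr_sumr sum_psi_scale.
rewrite (bigD1 1) ?oner_eq0 //= subrr eqxx (ch1 fc) mul1r.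
rewrite (eq_bigr (fun u => - f u)); last first.
  by move=> u /andP [_ /negbTE u1]; rewrite subr_eq0 u1 mulrN1.
rewrite sumrN.
have := sum_nz_ch_nt fc fnt; rewrite (bigD1 1) ?oner_eq0 //= (ch1 fc) => /eqP.
rewrite addrC addr_eq0 => /eqP ->.
by rewrite opprK subrK.
Qed.

Lemma gaussc_nz (f : ch) : is_mchar f -> gaussc psi f != 0.
Proof.
move=> fc; apply/eqP => E; have := GS fc; rewrite E mul0r => /eqP.
by rewrite eq_sym oppr_eq0 (negbTE qC_nz).
Qed.

Lemma gauss_nz (f : ch) : is_mchar f -> gauss psi f != 0.
Proof.
move=> fc; have := gaussc_nz fc; rewrite /gaussc.
by apply: contraNneq => ->; rewrite mulr0.
Qed.


Definition coefH (As Bs : seq ch) (nu : mchar F) : algC :=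
  (\prod_(a <- As) poch psi a nu) / (pochc psi (eps F) nu * \prod_(b <- Bs) pochc psi b nu).

Lemma expand n (As Bs : 'I_n -> seq ch) (a : F -> algC) (h : 'I_n -> F -> F) :
  \sum_(t | t != 0) a t * \prod_(i < n) hypF psi (As i) (Bs i) (h i t)
  = (1 - qC F) ^- n * \sum_(nus : {ffun 'I_n -> mchar F})
      \sum_(t | t != 0) a t * \prod_(i < n) (coefH (As i) (Bs i) (nus i) * (nus i : ch) (h i t)).
Proof.
rewrite exchange_big mulr_sumr /=; apply: eq_bigr => t _.
rewrite /hypF big_split /= prodr_const card_ord exprVn bigA_distr_bigA /=.
by rewrite mulrCA mulr_sumr; congr (_ * _); apply: eq_bigr => nus _; rewrite mulr_sumr.
Qed.

Lemma prod_pt n (nus : {ffun 'I_n -> mchar F}) (c : 'I_n -> algC) (l : 'I_n -> F) (y : F) :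
  \prod_(i < n) (c i * (nus i : ch) (l i * y)) =
  \prod_(i < n) (c i * (nus i : ch) (l i)) * cprod nus y.
Proof.
rewrite cprodE -big_split /=; apply: eq_bigr => i _.
by rewrite (chM (mch_ch _)) mulrA.
Qed.

Lemma part1 n (n0 : (0 < n)%N) (alpha : mchar F) (be ga : 'I_n -> mchar F) (lam : 'I_n -> F) :
        - gauss psi (alpha : {ffun F -> algC})
          * FA psi (alpha : {ffun F -> algC})
               (fun i => (be i : {ffun F -> algC}))
               (fun i => (ga i : {ffun F -> algC})) lam
        = \sum_(t : F | t != 0) psi t * (alpha : {ffun F -> algC}) t
            * \prod_(i < n) hypF psi [:: (be i : {ffun F -> algC})]
                                     [:: (ga i : {ffun F -> algC})] (lam i * t).
Proof.
rewrite (@expand n (fun i => [:: (be i : ch)]) (fun i => [:: (ga i : ch)])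
   (fun t => psi t * (alpha : ch) t) (fun i t => lam i * t)).
rewrite /FA mulrCA mulr_sumr; congr (_ * _); apply: eq_bigr => nus _.
set K := \prod_(i < n) (coefH [:: (be i : ch)] [:: (ga i : ch)] (nus i) * mch (nus i) (lam i)).
rewrite [RHS](eq_bigr (fun t => K * (psi t * ((alpha:ch) t * cprod nus t)))); last first.
  by move=> t _; rewrite (prod_pt nus (fun i => coefH [:: (be i : ch)] [:: (ga i : ch)] (nus i)) lam t) -/K; ring.
rewrite -mulr_sumr.
have -> : \sum_(t | t != 0) psi t * ((alpha : ch) t * cprod nus t)
          = - gauss psi (cmul alpha (cprod nus)).
  by rewrite /gauss opprK; apply: eq_bigr => t _; rewrite cmulE.
have ga0 := gauss_nz (mch_ch alpha).
have -> : K = \prod_(i < n) poch psi (be i) (mch (nus i)) /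
   \prod_(i < n) pochc psi (ga i) (mch (nus i)) * lauP psi nus lam.
  rewrite /K /lauP -prodfV -!big_split /=; apply: eq_bigr => i _.
  rewrite /coefH !big_cons !big_nil !mulr1 invfM; ring.
rewrite [poch psi alpha _]/poch.
move: (gauss psi alpha) ga0 ((\prod_(i < n) pochc psi (ga i) (mch (nus i)))^-1) => A A0 Q; field; exact: A0.
Qed.


Lemma gauss_cmulE (a b : ch) :
  \sum_(t | t != 0) psi t * (a t * b t) = - gauss psi (cmul a b).
Proof. by rewrite /gauss opprK; apply: eq_bigr => t _; rewrite cmulE. Qed.

Lemma part4 n (n0 : (0 < n)%N) (alpha beta : mchar F) (ga : 'I_n -> mchar F) (lam : 'I_n -> F) :
        gauss psi (alpha : {ffun F -> algC}) * gauss psi (beta : {ffun F -> algC})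
          * FC psi (alpha : {ffun F -> algC}) (beta : {ffun F -> algC})
               (fun i => (ga i : {ffun F -> algC})) lam
        = \sum_(s : F | s != 0) \sum_(t : F | t != 0)
            psi (s + t) * (alpha : {ffun F -> algC}) s * (beta : {ffun F -> algC}) t
            * \prod_(i < n) hypF psi [::] [:: (ga i : {ffun F -> algC})]
                                     (lam i * s * t).
Proof.
rewrite (eq_bigr (fun s => (1 - qC F) ^- n * \sum_(nus : {ffun 'I_n -> mchar F})
      \sum_(t | t != 0) (psi (s + t) * (alpha : ch) s * (beta : ch) t) *
         \prod_(i < n) (coefH [::] [:: (ga i : ch)] (nus i) * (nus i : ch) (lam i * s * t))));
  last by move=> s _; rewrite (@expand n (fun i => [::]) (fun i => [:: (ga i : ch)])
   (fun t => psi (s + t) * (alpha : ch) s * (beta : ch) t) (fun i t => lam i * s * t)).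
rewrite -mulr_sumr exchange_big /=.
rewrite /FC mulrCA mulr_sumr; congr (_ * _); apply: eq_bigr => nus _.
set K := \prod_(i < n) (coefH [::] [:: (ga i : ch)] (nus i) * mch (nus i) (lam i)).
rewrite (eq_bigr (fun s => \sum_(t | t != 0) K * ((psi s * ((alpha:ch) s * cprod nus s)) *
      (psi t * ((beta:ch) t * cprod nus t))))); last first.
  move=> s _; apply: eq_bigr => t _.
  rewrite (prod_pt nus (fun i => coefH [::] [:: (ga i : ch)] (nus i)) (fun i => lam i * s) t).
  rewrite (prod_pt nus (fun i => coefH [::] [:: (ga i : ch)] (nus i)) lam s) -/K psi_add; ring.
under eq_bigr do rewrite -mulr_sumr.
rewrite -mulr_sumr -big_distrlr /= !gauss_cmulE.
have -> : K = lauP psi nus lam / \prod_(i < n) pochc psi (ga i) (mch (nus i)).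
  rewrite /K /lauP -prodfV -!big_split /=; apply: eq_bigr => i _.
  rewrite /coefH !big_cons !big_nil !mulr1 invfM; ring.
have ga0 := gauss_nz (mch_ch alpha).
have gb0 := gauss_nz (mch_ch beta).
rewrite [poch psi alpha _]/poch [poch psi beta _]/poch.
move: (gauss psi alpha) ga0 (gauss psi beta) gb0 ((\prod_(i < n) pochc psi (ga i) (mch (nus i)))^-1) => A A0 B B0 Q.
field; by rewrite A0 B0.
Qed.


Lemma GS' (f : ch) : is_mchar f ->
  \sum_(t | t != 0) psi (- t) * (f t)^-1 = - qC F / gaussc psi f.
Proof.
move=> fc; have := GS fc; have := gaussc_nz fc.
move: (gaussc psi f) => G G0 <-; field; exact: G0.
Qed.

Lemma part2 n (n0 : (0 < n)%N) (gamma : mchar F) (al be : 'I_n -> mchar F) (lam : 'I_n -> F) :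
        - (qC F / gaussc psi (gamma : {ffun F -> algC}))
          * FB psi (fun i => (al i : {ffun F -> algC}))
               (fun i => (be i : {ffun F -> algC}))
               (gamma : {ffun F -> algC}) lam
        = \sum_(t : F | t != 0) psi (- t) * cinv (gamma : {ffun F -> algC}) t
            * \prod_(i < n) hypF psi [:: (al i : {ffun F -> algC});
                                         (be i : {ffun F -> algC})]
                                     [::] (lam i / t).
Proof.
rewrite (@expand n (fun i => [:: (al i : ch); (be i : ch)]) (fun i => [::])
   (fun t => psi (- t) * cinv (gamma : ch) t) (fun i t => lam i / t)).
rewrite /FB mulrCA mulr_sumr; congr (_ * _); apply: eq_bigr => nus _.
set K := \prod_(i < n) (coefH [:: (al i : ch); (be i : ch)] [::] (nus i) * mch (nus i) (lam i)).
rewrite [RHS](eq_bigr (fun t => K * (psi (- t) * (cmul gamma (cprod nus) t)^-1))); last first.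
  move=> t _; rewrite (prod_pt nus (fun i => coefH [:: (al i : ch); (be i : ch)] [::] (nus i)) lam t^-1) -/K.
  by rewrite (chV (cprod_ch nus n0)) cinvE cmulE invfM; ring.
rewrite -mulr_sumr GS' ?cmul_ch ?mch_ch ?cprod_ch //.
have -> : K = \prod_(i < n) (poch psi (al i) (mch (nus i)) * poch psi (be i) (mch (nus i)))
    * lauP psi nus lam.
  rewrite /K /lauP -!big_split /=; apply: eq_bigr => i _.
  rewrite /coefH !big_cons !big_nil !mulr1.
  ring.
have g0 := gaussc_nz (mch_ch gamma).
have g1 := gaussc_nz (cmul_ch (mch_ch gamma) (cprod_ch nus n0)).
rewrite /pochc.
move: (gaussc psi gamma) g0 (gaussc psi (cmul gamma (cprod nus))) g1 => A A0 B B0.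
field; by rewrite B0 A0.
Qed.


Section Quad.
Hypothesis two_nz : (2 : F) != 0.

Notation phi := (quadchar F).

Definition Nsq (y : F) : nat := #|[pred w : F | w ^+ 2 == y]|.

Lemma quadE x : phi x = if x == 0 then 0 else if [exists y : F, y ^+ 2 == x] then 1 else -1.
Proof. by rewrite /quadchar ffunE. Qed.

Lemma Nsq_phi y : (Nsq y)%:R = 1 + phi y.
Proof.
rewrite quadE /Nsq; case: eqP => [->|/eqP ynz].
  rewrite addr0 (@eq_card _ _ (pred1 (0:F))) ?card1 // => w /=.
  by rewrite inE expf_eq0.
case: existsP => [[w0 /eqP w0y]|nex].
  rewrite (@eq_card _ _ (pred2 w0 (- w0))) ?card2; last first.
    by move=> w; rewrite inE /= -w0y eqf_sqr.
  have w0nz : w0 != 0 by apply: contraNneq ynz => w00; rewrite -w0y w00 expr0n.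
  have -> : w0 != - w0.
    apply/eqP => E; have h : 2 * w0 = 0 by rewrite mulr_natl mulr2n {2}E subrr.
    by move/eqP: h; rewrite mulf_eq0 (negbTE two_nz) (negbTE w0nz).
  by [].
rewrite (eq_card0 (A := [pred w | w ^+ 2 == y])) ?subrr //.
by move=> w /=; apply/negP => /eqP h; apply: nex; exists w; rewrite h.
Qed.

Lemma sum_Nsq (g : F -> algC) : \sum_x g x * (Nsq x)%:R = \sum_w g (w ^+ 2).
Proof.
have E x : (Nsq x)%:R = \sum_(w | w ^+ 2 == x) (1 : algC).
  by rewrite sumr_const /Nsq.
under eq_bigr do rewrite E mulr_sumr mulr1.
under eq_bigr do rewrite big_mkcond /=.
rewrite exchange_big /=; apply: eq_bigr => w _.
rewrite -big_mkcond /= (eq_bigl (fun x => x == w ^+ 2)) ?big_pred1_eq // => x; by rewrite eq_sym.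
Qed.

Lemma sum_phi : \sum_x phi x = 0.
Proof.
have := sum_Nsq (fun _ => 1); under eq_bigr do rewrite mul1r Nsq_phi.
by rewrite big_split /= => /eqP; rewrite -subr_eq0 addrAC subrr add0r => /eqP.
Qed.

Lemma phi_cases x : [\/ phi x = 0, phi x = 1 | phi x = -1].
Proof. by rewrite quadE; case: ifP => _; [|case: ifP => _]; [constructor 1|constructor 2|constructor 3]. Qed.

Lemma phi0 : phi 0 = 0.
Proof. by rewrite quadE eqxx. Qed.

Lemma phi_sq w : w != 0 -> phi (w ^+ 2) = 1.
Proof.
move=> wnz; rewrite quadE expf_eq0 /= (negbTE wnz).
by case: existsP => // [[]]; exists w.
Qed.

Lemma phi_sqM w y : w != 0 -> phi (w ^+ 2 * y) = phi y.
Proof.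
move=> wnz; rewrite !quadE mulf_eq0 expf_eq0 /= (negbTE wnz) /=.
case: eqP => // _; congr (if _ then _ else _).
apply/existsP/existsP => [[v /eqP hv]|[v /eqP hv]].
  by exists (v / w); rewrite expr_div_n hv mulrC mulKf // expf_neq0.
by exists (w * v); rewrite exprMn hv.
Qed.

Lemma m1_neq1 : (-1 : algC) != 1.
Proof. by rewrite eq_sym -subr_eq0 opprK -[_ + _]/(2%:R) pnatr_eq0. Qed.

Lemma phi1_sq x : phi x = 1 -> exists2 w, w != 0 & x = w ^+ 2.
Proof.
rewrite quadE; case: eqP => [_ /eqP|/eqP xnz]; first by rewrite eq_sym oner_eq0.
case: existsP => [[w /eqP hw] _|_ /eqP]; last by rewrite (negbTE m1_neq1).
exists w => //; apply: contraNneq xnz => w0; by rewrite -hw w0 expr0n.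
Qed.

Lemma phi_nz x : x != 0 -> phi x != 0.
Proof. by move=> xnz; rewrite quadE (negbTE xnz); case: ifP => _; rewrite ?oppr_eq0 oner_eq0. Qed.

Lemma phi_mulN a y : phi a = -1 -> phi y != -1 -> phi (a * y) = - phi y.
Proof.
move=> pa; case: (phi_cases y) => hy; rewrite hy ?eqxx // => _.
- case: (eqVneq y 0) => [->|ynz]; first by rewrite mulr0 phi0 oppr0.
  by move: (phi_nz ynz); rewrite hy eqxx.
- by case: (phi1_sq hy) => w wnz ->; rewrite mulrC phi_sqM.
Qed.

Lemma phi_nsq_mul a b : phi a = -1 -> phi b = -1 -> phi (a * b) = 1.
Proof.
move=> pa pb.
have anz : a != 0 by apply: contra_eq_neq pa => ->; rewrite phi0 eq_sym oppr_eq0 oner_eq0.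
have au : a \is a GRing.unit by rewrite unitfE.
have S1 : \sum_y phi (a * y) = 0.
  by rewrite -[RHS]sum_phi [RHS](reindex_inj (mulrI au)).
have {}S1 : \sum_(y | phi y == -1) phi (a * y) + \sum_(y | phi y != -1) - phi y = 0.
  rewrite -[RHS]S1 [RHS](bigID (fun y => phi y == -1)) /=; congr (_ + _).
  by apply: eq_bigr => y hy; rewrite phi_mulN.
have S2 := sum_phi; rewrite (bigID (fun y => phi y == -1)) /= in S2.
rewrite (eq_bigr (fun y => -1)) in S2; last by move=> y /eqP.
have S3 : \sum_(y | phi y == -1) (1 - phi (a * y)) = 0.
  have E1 : \sum_(y | phi y == -1) phi (a * y) = \sum_(y | phi y != -1) phi y.
    by move/eqP: S1; rewrite sumrN addr_eq0 opprK => /eqP.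
  have E2 : \sum_(y | phi y != -1) phi y = \sum_(y | phi y == -1) 1.
    by move/eqP: S2; rewrite sumrN addrC addr_eq0 opprK => /eqP.
  by rewrite sumrB E1 E2 subrr.
have nn : forall y, phi y == -1 -> 0 <= 1 - phi (a * y).
  move=> y _; case: (phi_cases (a * y)) => ->; rewrite ?subr0 ?subrr ?ler01 //.
  by rewrite opprK -[_ + _]/(2%:R) ler0n.
have := psumr_eq0P nn S3 (i := b); rewrite pb eqxx => /(_ isT) /eqP.
by rewrite subr_eq0 eq_sym => /eqP.
Qed.

Lemma phiM x y : phi (x * y) = phi x * phi y.
Proof.
case: (eqVneq x 0) => [->|xnz]; first by rewrite mul0r phi0 mul0r.
case: (eqVneq y 0) => [->|ynz]; first by rewrite mulr0 phi0 mulr0.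
case: (phi_cases x) => hx; first by move: (phi_nz xnz); rewrite hx eqxx.
  by case: (phi1_sq hx) => w wnz ->; rewrite phi_sqM // phi_sq // mul1r.
case: (phi_cases y) => hy; first by move: (phi_nz ynz); rewrite hy eqxx.
  by case: (phi1_sq hy) => w wnz ->; rewrite mulrC phi_sqM // hx phi_sq // mulr1.
by rewrite phi_nsq_mul // hx hy mulrNN mulr1.
Qed.

Lemma phi_ch : is_mchar phi.
Proof.
apply: mkch => [||x y]; first exact: phi0; last exact: phiM.
by rewrite -(expr1n _ 2) phi_sq ?oner_eq0.
Qed.

Lemma sqr_eps (c : ch) : is_mchar c -> cmul c c = eps F -> c != eps F -> c = phi.
Proof.
move=> cc cce cne.
have cw w : w != 0 -> c (w ^+ 2) = 1.
  by move=> wnz; rewrite expr2 (chM cc) -cmulE cce epsE (negbTE wnz).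
case: (ch_nt_ex cc cne) => a anz ca1.
have ca : c a = -1.
  have : c a ^+ 2 == 1 by rewrite expr2 -cmulE cce epsE (negbTE anz).
  by rewrite sqrf_eq1 (negbTE ca1) => /eqP.
have pa : phi a = -1.
  case: (phi_cases a) => // pa; first by move: (phi_nz anz); rewrite pa eqxx.
  by case: (phi1_sq pa) => w wnz aw; move: ca1; rewrite aw cw ?eqxx.
apply/ffunP => x; case: (eqVneq x 0) => [->|xnz]; first by rewrite (ch0 cc) phi0.

case: (phi_cases x) => px; first by move: (phi_nz xnz); rewrite px eqxx.
  by case: (phi1_sq px) => w wnz xw; rewrite px xw cw.
rewrite px; case: (phi1_sq (phi_nsq_mul pa px)) => v vnz.
move=> /(congr1 c); rewrite (chM cc) ca cw // => /eqP.
by rewrite mulN1r eq_sym -eqr_oppLR => /eqP <-.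
Qed.

Definition G (f : ch) := \sum_x psi x * f x.
Definition J (f1 f2 : ch) := \sum_u f1 u * f2 (1 - u).

Lemma gaussG (f : ch) : is_mchar f -> gauss psi f = - G f.
Proof. by move=> fc; rewrite gauss_full // (ch0 fc). Qed.

Lemma GJ (c1 c2 : ch) : is_mchar c1 -> is_mchar c2 ->
  G c1 * G c2 = G (cmul c1 c2) * J c1 c2 + c2 (-1) * \sum_x c1 x * c2 x.
Proof.
move=> h1 h2; rewrite /G big_distrlr /=.
rewrite (eq_bigr (fun x => \sum_z psi z * (c1 x * c2 (z - x)))); last first.
  move=> x _; rewrite (reindex_inj (addIr (- x))) /=; apply: eq_bigr => z _.
  have hz : psi z = psi x * psi (z + - x) by rewrite -psi_add addrCA subrr addr0.
  by rewrite hz; ring.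
rewrite exchange_big /= (bigD1 0) //= psi0.
rewrite (eq_bigr (fun x => c2 (-1) * (c1 x * c2 x))); last first.
  move=> x _; rewrite mul1r (_ : 0 - x = -1 * x); last by rewrite sub0r mulN1r.
  by rewrite (chM h2) mulrCA.
rewrite -mulr_sumr addrC; congr (_ + _).
rewrite /J mulr_suml -[RHS]sum_nz_full; last by rewrite cmulE (ch0 h1) !mul0r mulr0 mul0r.
apply: eq_bigr => z znz.
have zu : z \is a GRing.unit by rewrite unitfE.
rewrite (reindex_inj (mulrI zu)) /= [RHS]mulr_sumr; apply: eq_bigr => u _.
have -> : z - z * u = z * (1 - u) by rewrite mulrBr mulr1.
by rewrite !(chM h1, chM h2) cmulE; ring.
Qed.

Lemma four_nz : (4 : F) != 0.
Proof.
have -> : (4 : F) = 2 * 2 by rewrite -natrM.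
by rewrite mulf_neq0.
Qed.

Lemma JJ (c : ch) : is_mchar c -> J c c = (c 4)^-1 * (\sum_y c y + J phi c).
Proof.
move=> cc; rewrite /J.
have hinj : injective (fun w : F => (1 + w) / 2).
  by move=> w1 w2 /(mulIf (invr_neq0 two_nz)) /addrI.
rewrite (reindex_inj hinj) /=.
rewrite (eq_bigr (fun w => (c 4)^-1 * c (1 - w ^+ 2))); last first.
  move=> w _; rewrite -(chM cc) -(chV cc) -(chM cc) mulrC; congr (c _).
  by field; rewrite four_nz two_nz.
rewrite -mulr_sumr; congr (_ * _).
rewrite -(sum_Nsq (fun y => c (1 - y))).
rewrite (eq_bigr (fun x => c (1 - x) + phi x * c (1 - x))); last by move=> x _; rewrite Nsq_phi mulrDr mulr1 mulrC.
rewrite big_split /=; congr (_ + _).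
  have hinj2 : injective (fun y : F => 1 - y) by move=> y1 y2 /addrI /oppr_inj.
  by rewrite (reindex_inj hinj2) /=; apply: eq_bigr => y _; rewrite subKr.
Qed.

Lemma sum_eps : \sum_x eps F x = qC F - 1.
Proof.
rewrite -sum_nz_full ?epsE ?eqxx // -sum1_nz.
by apply: eq_bigr => x /negbTE xnz; rewrite epsE xnz.
Qed.

Lemma sigma_ch (f : ch) : is_mchar f -> \sum_x f x = if f == eps F then qC F - 1 else 0.
Proof. by move=> fc; case: eqP => [->|/eqP fne]; [exact: sum_eps | exact: sum_ch_nt]. Qed.

Lemma G_eps : G (eps F) = -1.
Proof. by apply: oppr_inj; rewrite opprK -gaussG ?eps_ch ?gauss_eps. Qed.

Lemma phi2 x : phi x * phi x = eps F x.
Proof.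
rewrite epsE; case: eqP => [->|/eqP xnz]; first by rewrite phi0 mulr0.
case: (phi_cases x) => hx; rewrite hx ?mulrNN ?mulr1 //; by move: (phi_nz xnz); rewrite hx eqxx.
Qed.

Lemma eps2 x : eps F x * eps F x = eps F x.
Proof. by rewrite epsE; case: eqP; rewrite ?mulr0 ?mulr1. Qed.

Lemma G_ext (f g : ch) : (forall x, f x = g x) -> G f = G g.
Proof. by move=> h; apply: eq_bigr => x _; rewrite h. Qed.

Lemma HD_key (c : ch) : is_mchar c ->
  G (cmul c phi) * ((c 4)^-1 * G (cmul c c) * \sum_y c y)
  + G (cmul c phi) * c (-1) * \sum_x c x * c x
  = (c 4)^-1 * G (cmul c c) * c (-1) * \sum_x phi x * c x.
Proof.
move=> cc.
have m1nz : (-1 : F) != 0 by rewrite oppr_eq0 oner_eq0.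
case: (eqVneq c (eps F)) => [ce|cne].
  rewrite ce epsE (negbTE four_nz) invr1 sum_eps.
  rewrite (G_ext (f := cmul (eps F) (eps F)) (g := eps F)); last by move=> x; rewrite cmulE eps2.
  rewrite G_eps epsE (negbTE m1nz).
  rewrite (eq_bigr (fun x => eps F x)); last by move=> x _; rewrite eps2.
  rewrite sum_eps (eq_bigr (fun x => phi x)) ?sum_phi; last first.
    by move=> x _; rewrite epsE; case: eqP => [->|]; rewrite ?phi0 ?mulr0 ?mulr1.
  ring.
have s10 : \sum_y c y = 0 by exact: sum_ch_nt.
case: (eqVneq c phi) => [cp|cnp].
  have p4 : phi 4 = 1.
    have -> : (4 : F) = 2 ^+ 2 by rewrite expr2 -natrM.
    exact: phi_sq.
  have Gpp : G (cmul phi phi) = -1 by rewrite (G_ext (g := eps F)) ?G_eps // => x; rewrite cmulE phi2.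
  have spp : \sum_x phi x * phi x = qC F - 1 by rewrite (eq_bigr (fun x => eps F x)) ?sum_eps // => x _; rewrite phi2.
  rewrite s10 cp p4 invr1 Gpp spp; ring.
set s2 := \sum_x c x * c x; set s3 := \sum_x phi x * c x.
have s20 : s2 = 0.
  have ch2 := cmul_ch cc cc.
  rewrite /s2 (eq_bigr (fun x => cmul c c x)) ?sum_ch_nt // => [|x _]; last by rewrite cmulE.
  apply/eqP => h; move/eqP: cnp; apply; exact: sqr_eps.
have s30 : s3 = 0.
  have chp := cmul_ch phi_ch cc.
  rewrite /s3 (eq_bigr (fun x => cmul phi c x)) ?sum_ch_nt // => [|x _]; last by rewrite cmulE.
  apply/eqP => h; move/eqP: cnp; apply; apply/ffunP => x.
  case: (eqVneq x 0) => [->|xnz]; first by rewrite (ch0 cc) phi0.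
  have : cmul phi c x = eps F x by rewrite h.
  rewrite cmulE epsE (negbTE xnz) => /(congr1 (fun y => phi x * y)).
  by rewrite mulrA phi2 epsE (negbTE xnz) mul1r mulr1.
by rewrite s10 s20 s30; ring.
Qed.

Lemma HD (c : ch) : is_mchar c ->
  G c * G (cmul c phi) = (c 4)^-1 * G (cmul c c) * G phi.
Proof.
move=> cc.
have Gc0 : G c != 0 by have := gauss_nz cc; rewrite gaussG // oppr_eq0.
apply: (mulfI Gc0).
have E1 : G c * (G c * G (cmul c phi)) =
    G (cmul c phi) * (G (cmul c c) * J c c + c (-1) * \sum_x c x * c x).
  by rewrite mulrA GJ // mulrC.
have E2 : G c * ((c 4)^-1 * G (cmul c c) * G phi) =
    (c 4)^-1 * G (cmul c c) * (G (cmul phi c) * J phi c + c (-1) * \sum_x phi x * c x).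
  by rewrite -GJ ?phi_ch //; ring.
have Gpc : G (cmul phi c) = G (cmul c phi) by apply: G_ext => x; rewrite !cmulE mulrC.
rewrite E1 E2 Gpc JJ //.
set A := G (cmul c phi); set B := G (cmul c c); set i4 := (c 4)^-1.
set s1 := \sum_y c y; set s2 := \sum_x c x * c x; set s3 := \sum_x phi x * c x.
have key := HD_key cc; rewrite -/A -/B -/i4 -/s1 -/s2 -/s3 in key.
rewrite (_ : A * (B * (i4 * (s1 + J phi c)) + c (-1) * s2) =
     A * (i4 * B * J phi c) + (A * (i4 * B * s1) + A * c (-1) * s2)); last by ring.
by rewrite key; ring.
Qed.

Lemma G_nz (f : ch) : is_mchar f -> G f != 0.
Proof. by move=> fc; have := gauss_nz fc; rewrite gaussG // oppr_eq0. Qed.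

Lemma part3 n (n0 : (0 < n)%N) (alpha : mchar F) (be : 'I_n -> mchar F) (lam : 'I_n -> F) :
        - gauss psi (cmul (alpha : {ffun F -> algC}) alpha)
          * FC psi (alpha : {ffun F -> algC})
               (cmul (alpha : {ffun F -> algC}) (quadchar F))
               (fun i => (be i : {ffun F -> algC})) lam
        = \sum_(t : F | t != 0) psi t * cmul (alpha : {ffun F -> algC}) alpha t
            * \prod_(i < n) hypF psi [::] [:: (be i : {ffun F -> algC})]
                                     (lam i * t ^+ 2 / 4).
Proof.
rewrite (@expand n (fun i => [::]) (fun i => [:: (be i : ch)])
   (fun t => psi t * cmul (alpha : ch) alpha t) (fun i t => lam i * t ^+ 2 / 4)).
rewrite /FC mulrCA mulr_sumr; congr (_ * _); apply: eq_bigr => nus _.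
have ca := mch_ch alpha.
have cC := cprod_ch nus n0.
set C := cprod nus.
set aC := cmul (alpha : ch) C.
have caC : is_mchar aC := cmul_ch ca cC.
set K := \prod_(i < n) (coefH [::] [:: (be i : ch)] (nus i) * mch (nus i) (lam i)).
rewrite [RHS](eq_bigr (fun t => K * (C 4)^-1 * (psi t * cmul aC aC t))); last first.
  move=> t _.
  rewrite (prod_pt nus (fun i => coefH [::] [:: (be i : ch)] (nus i)) (fun i => lam i * t ^+ 2) 4^-1).
  rewrite (prod_pt nus (fun i => coefH [::] [:: (be i : ch)] (nus i)) lam (t ^+ 2)) -/K -/C.
  rewrite (chV cC) expr2 (chM cC) !cmulE; ring.
rewrite -mulr_sumr sum_nz_full; last by rewrite (ch0 (cmul_ch caC caC)) mulr0.
rewrite -/(G (cmul aC aC)).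
have -> : K = lauP psi nus lam / \prod_(i < n) pochc psi (be i) (mch (nus i)).
  rewrite /K /lauP -prodfV -!big_split /=; apply: eq_bigr => i _.
  rewrite /coefH !big_cons !big_nil !mulr1 invfM; ring.
rewrite /poch !gaussG ?cmul_ch ?phi_ch // -/C -/aC.
rewrite (G_ext (f := cmul (cmul alpha phi) C) (g := cmul aC phi)); last first.
  by move=> x; rewrite !cmulE; ring.
have H1 := HD ca; have H2 := HD caC.
have a4 : (alpha : ch) 4 != 0 by apply: ch_nz ca _ four_nz.
have C4 : C 4 != 0 by apply: ch_nz cC _ four_nz.
have Ga2 := G_nz (cmul_ch ca ca).
have Gp := G_nz phi_ch.
rewrite opprK !invrN !mulrNN mulf_div H1 H2 cmulE invfM.
move: (G (cmul aC aC)) ((\prod_(i < n) pochc psi (be i) (mch (nus i)))^-1) => Z Q.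
move: ((alpha : ch) 4) (C 4) (G (cmul alpha alpha)) (G phi) a4 C4 Ga2 Gp => x y u v x0 y0 u0 v0.
field.
by rewrite x0 y0 u0 v0.
Qed.

End Quad.

End Main.

Theorem theorem3p1 (F : finFieldType) (psi : F -> algC)
  (psi_add : forall x y : F, psi (x + y) = psi x * psi y)
  (psi0 : psi 0 = 1) (psi_nontriv : exists x : F, psi x != 1)
  (n : nat) (n_gt0 : (0 < n)%N)
  (alpha beta gamma : mchar F) (al be ga : 'I_n -> mchar F) :
  [/\ (* (i) *)
      forall lam : 'I_n -> F,
        - gauss psi (alpha : {ffun F -> algC})
          * FA psi (alpha : {ffun F -> algC})
               (fun i => (be i : {ffun F -> algC}))
               (fun i => (ga i : {ffun F -> algC})) lam
        = \sum_(t : F | t != 0) psi t * (alpha : {ffun F -> algC}) t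
            * \prod_(i < n) hypF psi [:: (be i : {ffun F -> algC})]
                                     [:: (ga i : {ffun F -> algC})] (lam i * t),
      (* (ii) *)
      forall lam : 'I_n -> F,
        - (qC F / gaussc psi (gamma : {ffun F -> algC}))
          * FB psi (fun i => (al i : {ffun F -> algC}))
               (fun i => (be i : {ffun F -> algC}))
               (gamma : {ffun F -> algC}) lam
        = \sum_(t : F | t != 0) psi (- t) * cinv (gamma : {ffun F -> algC}) t
            * \prod_(i < n) hypF psi [:: (al i : {ffun F -> algC});
                                         (be i : {ffun F -> algC})]
                                     [::] (lam i / t),
      (* (iii) *)
      (2 \notin [pchar F])%N ->
      forall lam : 'I_n -> F,
        - gauss psi (cmul (alpha : {ffun F -> algC}) alpha)
          * FC psi (alpha : {ffun F -> algC})
               (cmul (alpha : {ffun F -> algC}) (quadchar F))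
               (fun i => (be i : {ffun F -> algC})) lam
        = \sum_(t : F | t != 0) psi t * cmul (alpha : {ffun F -> algC}) alpha t
            * \prod_(i < n) hypF psi [::] [:: (be i : {ffun F -> algC})]
                                     (lam i * t ^+ 2 / 4)
    & (* (iv) *)
      forall lam : 'I_n -> F,
        gauss psi (alpha : {ffun F -> algC}) * gauss psi (beta : {ffun F -> algC})
          * FC psi (alpha : {ffun F -> algC}) (beta : {ffun F -> algC})
               (fun i => (ga i : {ffun F -> algC})) lam
        = \sum_(s : F | s != 0) \sum_(t : F | t != 0)
            psi (s + t) * (alpha : {ffun F -> algC}) s * (beta : {ffun F -> algC}) t
            * \prod_(i < n) hypF psi [::] [:: (ga i : {ffun F -> algC})]
                                     (lam i * s * t)].
Proof.
have two_of : (2 \notin [pchar F])%N -> (2 : F) != 0.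
  move=> h; apply: contra h => h2; rewrite inE /=; exact: h2.
split => [lam|lam|h2 lam|lam].
- exact: part1.
- exact: part2.
- exact: (part3 psi_add psi0 psi_nontriv (two_of h2)).
- exact: part4.
Qed.
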